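(* Let $L$ be a differential graded Lie algebra with differential $\delta$ (degree $-1$) and bracket $[\cdot,\cdot]$ (degree $0$), and let $D$ be the operator equal to $\delta$ on $L_1$ and zero on $L_i$, $i\ne1$. Fix $n$ and homogeneous elements $a_0,\dots,a_n\in L$. For $j,k\ge0$ with $j+k<n$ define $$Z_{n,j,k}=\sum_{\pi\in S_{n+1}}(-1)^{\varepsilon+|a_{\pi_1}|+\dots+|a_{\pi_j}|}\,\Big[\dots\Big[\big[\dots[Da_{\pi_0},a_{\pi_1}],\dots,a_{\pi_j}\big],\big[\dots[Da_{\pi_{j+1}},a_{\pi_{j+2}}],\dots,a_{\pi_{j+k+1}}\big]\Big],a_{\pi_{j+k+2}}\Big],\dots,a_{\pi_n}\Big],$$ i.e. the left-nested bracket of $Da_{\pi_0}$ with $a_{\pi_1},\dots,a_{\pi_j}$ is bracketed with the left-nested bracket of $Da_{\pi_{j+1}}$ with $a_{\pi_{j+2}},\dots,a_{\pi_{j+k+1}}$, and the result is then successively bracketed on the right with $a_{\pi_{j+k+2}},\dots,a_{\pi_n}$; here $(-1)^\varepsilon$ is the Koszul sign of the action of $\pi$ on $a_0\otimes\dots\otimes a_n$. Then $Z_{n,j,k}=Z_{n,k,j}$, and if $j+k+1<n$, then $Z_{n,j,k}=Z_{n,j+1,k}+Z_{n,j,k+1}$.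
   Context: A differential graded Lie algebra: $\mathbb{Z}$-graded vector space $L=\bigoplus_iL_i$ with graded antisymmetric bracket of degree $0$ satisfying the graded Jacobi identity and a square-zero derivation $\delta:L_i\to L_{i-1}$. *)

(* Defs.v *)
From HB Require Import structures.
From mathcomp Require Import all_boot all_order all_algebra all_fingroup.
Set Implicit Arguments. Unset Strict Implicit. Unset Printing Implicit Defensive.
Import Order.TTheory GRing.Theory Num.Theory.
Local Open Scope ring_scope.

Definition sgnz {K : fieldType} (z : int) : K := (-1) ^ z.

Definition is_dgla (K : fieldType) (L : lmodType K)
  (Lg : int -> {pred L}) (br : L -> L -> L) (delta : L -> L) : Prop :=
  (forall i, 0 \in Lg i) /\
  (forall i (c : K) x y, x \in Lg i -> y \in Lg i -> c *: x + y \in Lg i) /\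
  (forall x : L, exists (s : seq int) (f : int -> L),
      uniq s /\ (forall i, f i \in Lg i) /\ x = \sum_(i <- s) f i) /\
  (forall (s : seq int) (f : int -> L), uniq s -> (forall i, f i \in Lg i) ->
      \sum_(i <- s) f i = 0 -> forall i, i \in s -> f i = 0) /\
  (forall (c : K) x y z, br (c *: x + y) z = c *: br x z + br y z) /\
  (forall (c : K) x y z, br z (c *: x + y) = c *: br z x + br z y) /\
  (forall i j x y, x \in Lg i -> y \in Lg j -> br x y \in Lg (i + j)) /\
  (forall i j x y, x \in Lg i -> y \in Lg j ->
      br x y = - (sgnz (i * j) *: br y x)) /\
  (forall i j x y z, x \in Lg i -> y \in Lg j ->
      br x (br y z) = br (br x y) z + sgnz (i * j) *: br y (br x z)) /\
  (forall (c : K) x y, delta (c *: x + y) = c *: delta x + delta y) /\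
  (forall i x, x \in Lg i -> delta x \in Lg (i - 1)) /\
  (forall x, delta (delta x) = 0) /\
  (forall i x y, x \in Lg i ->
      delta (br x y) = br (delta x) y + sgnz i *: br x (delta y)).

Definition Dop (K : fieldType) (L : lmodType K) (delta : L -> L)
  (x : L) (dx : int) : L := if dx == 1 then delta x else 0.

Definition lnest (L : Type) (br : L -> L -> L) (x : L) (s : seq L) : L :=
  foldl br x s.

Definition koszul_exp (n : nat) (d : 'I_n.+1 -> int) (pi : 'S_n.+1) : int :=
  \sum_(p : 'I_n.+1) \sum_(q : 'I_n.+1 | (p < q)%N && (pi q < pi p)%N)
     d (pi p) * d (pi q).

Definition Zjk (K : fieldType) (L : lmodType K) (br : L -> L -> L)
  (delta : L -> L) (n : nat) (a : 'I_n.+1 -> L) (d : 'I_n.+1 -> int)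
  (j k : nat) : L :=
  \sum_(pi : 'S_n.+1)
    let b (p : nat) := a (pi (inord p)) in
    let db (p : nat) := d (pi (inord p)) in
    sgnz (koszul_exp d pi + \sum_(1 <= p < j.+1) db p) *:
      lnest br
        (br (lnest br (Dop delta (b 0%N) (db 0%N)) (map b (iota 1 j)))
            (lnest br (Dop delta (b j.+1) (db j.+1)) (map b (iota j.+2 k))))
        (map b (iota (j + k).+2 (n - (j + k).+1))).

(* Main.v *)
Require Import Defs.
From HB Require Import structures.
From mathcomp Require Import all_boot all_order all_algebra all_fingroup.
From mathcomp Require Import zify ring lra.
Import Order.TTheory GRing.Theory Num.Theory.
Local Open Scope ring_scope.
Set Implicit Arguments. Unset Strict Implicit. Unset Printing Implicit Defensive.


Lemma sgnzD (K : fieldType) (x y : int) : sgnz (x + y) = sgnz x * sgnz y :> K.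
Proof. by rewrite /sgnz exprzDr // unitrN1. Qed.

Lemma sgnz1 (K : fieldType) : sgnz 1 = -1 :> K.
Proof. by rewrite /sgnz expr1z. Qed.

Lemma sgnz2 (K : fieldType) (z : int) : sgnz (2 * z) = 1 :> K.
Proof.
rewrite /sgnz -exprz_exp.
have -> : (-1 : K) ^ 2 = 1 by rewrite (_ : 2 = (2%N : int)) // -exprnP sqrrN expr1n.
by rewrite exp1rz.
Qed.

Lemma sgnz_eq (K : fieldType) (x y z : int) : x = y + 2 * z -> sgnz x = sgnz y :> K.
Proof. by move=> ->; rewrite sgnzD sgnz2 mulr1. Qed.

Lemma sgnz_eqN (K : fieldType) (x y z : int) : x = y + 1 + 2 * z -> sgnz x = - sgnz y :> K.
Proof. by move=> ->; rewrite !sgnzD sgnz2 sgnz1 mulr1 mulrN1. Qed.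

Lemma br0l (K : fieldType) (L : lmodType K) (br : L -> L -> L)
  (brl : forall (c : K) x y z, br (c *: x + y) z = c *: br x z + br y z) z :
  br 0 z = 0.
Proof.
have h := brl 1 0 0 z; rewrite !scale1r !addr0 in h.
by have := congr1 (fun v => v - br 0 z) h; rewrite subrr addrK => <-.
Qed.

Lemma br0r (K : fieldType) (L : lmodType K) (br : L -> L -> L)
  (brr : forall (c : K) x y z, br z (c *: x + y) = c *: br z x + br z y) z :
  br z 0 = 0.
Proof.
have h := brr 1 0 0 z; rewrite !scale1r !addr0 in h.
by have := congr1 (fun v => v - br z 0) h; rewrite subrr addrK => <-.
Qed.

Lemma lnest_lin (K : fieldType) (L : lmodType K) (br : L -> L -> L)
  (brl : forall (c : K) x y z, br (c *: x + y) z = c *: br x z + br y z) s :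
  forall (c : K) x y, lnest br (c *: x + y) s = c *: lnest br x s + lnest br y s.
Proof.
elim: s => [//|t s IH] c x y /=.
by rewrite /lnest /= brl; exact: IH.
Qed.

Lemma lnest_scale (K : fieldType) (L : lmodType K) (br : L -> L -> L)
  (brl : forall (c : K) x y z, br (c *: x + y) z = c *: br x z + br y z) s
  (c : K) x : lnest br (c *: x) s = c *: lnest br x s.
Proof.
have h := lnest_lin brl s c x 0; rewrite !addr0 in h; rewrite h.
suff -> : lnest br 0 s = 0 by rewrite addr0.
elim: s {h} => [//|t s IH]; by rewrite /lnest /= (br0l brl) -/(lnest br 0 s) IH.
Qed.

Lemma lnest_zero (K : fieldType) (L : lmodType K) (br : L -> L -> L)
  (brl : forall (c : K) x y z, br (c *: x + y) z = c *: br x z + br y z) s :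
  lnest br 0 s = 0.
Proof. by have := lnest_scale brl s 0 0; rewrite !scale0r. Qed.

Lemma lnest_deg (K : fieldType) (L : lmodType K) (Lg : int -> {pred L})
  (br : L -> L -> L)
  (brdeg : forall i j x y, x \in Lg i -> y \in Lg j -> br x y \in Lg (i + j))
  (b : nat -> L) (e : nat -> int) (Hb : forall p, b p \in Lg (e p)) m :
  forall st x i, x \in Lg i ->
  lnest br x (map b (iota st m)) \in Lg (i + \sum_(p <- iota st m) e p).
Proof.
elim: m => [|m IH] st x i Hx /=; first by rewrite big_nil addr0.
rewrite big_cons addrA; apply: IH; exact: brdeg.
Qed.


Definition bi (b : bool) : int := if b then 1 else 0.

Lemma sum_pairs N (h : 'I_N -> 'I_N -> int) : (forall i j, h i j = h j i) ->
  \sum_(i : 'I_N) \sum_(j : 'I_N | i != j) h i j =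
  2 * \sum_(i : 'I_N) \sum_(j : 'I_N | (i < j)%N) h i j.
Proof.
move=> hs.
have E : forall i : 'I_N, \sum_(j : 'I_N | i != j) h i j =
   \sum_(j : 'I_N | (i < j)%N) h i j + \sum_(j : 'I_N | (j < i)%N) h i j.
  move=> i; rewrite (bigID (fun j : 'I_N => (i < j)%N)) /=; congr (_ + _); apply: eq_bigl => j.
    by rewrite neq_ltn; case: ltngtP.
  by rewrite neq_ltn; case: ltngtP.
rewrite (eq_bigr _ (fun i _ => E i)) big_split /=.
have -> : \sum_(i : 'I_N) \sum_(j : 'I_N | (j < i)%N) h i j = \sum_(i : 'I_N) \sum_(j : 'I_N | (i < j)%N) h i j.
  rewrite (eq_bigr (fun i : 'I_N => \sum_(j : 'I_N) (if (j < i)%N then h i j else 0))); last first.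
    by move=> i _; rewrite big_mkcond.
  rewrite exchange_big /=; apply: eq_bigr => i _.
  by rewrite [RHS]big_mkcond /=; apply: eq_bigr => j _; rewrite hs.
by rewrite (_ : 2 = 1 + 1) // mulrDl mul1r.
Qed.

Lemma bi_xor (a b : bool) : bi (a != b) = bi a + bi b - 2 * bi a * bi b.
Proof. by case: a; case: b; rewrite /bi /=; lia. Qed.

Lemma koszul_mul n (d : 'I_n.+1 -> int) (s p : 'S_n.+1) :
  exists c : int, koszul_exp d (s * p) =
    koszul_exp (fun i => d (p i)) s + koszul_exp d p - 2 * c.
Proof.
set w := fun i j : 'I_n.+1 => d (p (s i)) * d (p (s j)).
set U := fun x y : 'I_n.+1 => bi ((x < y)%N != (p x < p y)%N).
set A := fun i j : 'I_n.+1 => bi (s j < s i)%N.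
have E1 : koszul_exp d (s * p) =
    \sum_(i : 'I_n.+1) \sum_(j : 'I_n.+1 | (i < j)%N) w i j * (A i j + U (s i) (s j) - 2 * A i j * U (s i) (s j)).
  rewrite /koszul_exp; apply: eq_bigr => i _; rewrite big_mkcondr; apply: eq_bigr => j ij.
  have nij : s i != s j by rewrite (inj_eq perm_inj) neq_ltn ij.
  rewrite /A /U -bi_xor !permM /w.
  have -> : ((s j < s i)%N != ((s i < s j)%N != (p (s i) < p (s j))%N)) = (p (s j) < p (s i))%N.
    have h1 : (s j < s i)%N = ~~ (s i < s j)%N.
      by move: nij; rewrite neq_ltn; case: ltngtP.
    have h2 : (p (s j) < p (s i))%N = ~~ (p (s i) < p (s j))%N.
      have : p (s i) != p (s j) by rewrite (inj_eq perm_inj).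
      by rewrite neq_ltn; case: ltngtP.
    by rewrite h1 h2; case: (_ < _)%N; case: (_ < _)%N.
  by rewrite /bi; case: ifP; rewrite ?mulr1 ?mulr0.
have KX : koszul_exp (fun i => d (p i)) s =
    \sum_(i : 'I_n.+1) \sum_(j : 'I_n.+1 | (i < j)%N) w i j * A i j.
  rewrite /koszul_exp; apply: eq_bigr => i _; rewrite big_mkcondr; apply: eq_bigr => j ij.
  by rewrite /A /w /bi; case: ifP; rewrite ?mulr1 ?mulr0.
set h := fun x y : 'I_n.+1 => d (p x) * d (p y) * U x y.
have hs : forall x y, h x y = h y x.
  move=> x y; rewrite /h /U; case: (eqVneq x y) => [->//|nxy].
  have nxy' : p x != p y by rewrite (inj_eq perm_inj).
  have h1 : (y < x)%N = ~~ (x < y)%N by move: nxy; rewrite neq_ltn; case: ltngtP.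
  have h2 : (p y < p x)%N = ~~ (p x < p y)%N by move: nxy'; rewrite neq_ltn; case: ltngtP.
  by rewrite h1 h2 (mulrC (d (p x))); case: (_ < _)%N; case: (_ < _)%N.
have KY : koszul_exp d p =
    \sum_(i : 'I_n.+1) \sum_(j : 'I_n.+1 | (i < j)%N) w i j * U (s i) (s j).
  have e1 : \sum_(i : 'I_n.+1) \sum_(j : 'I_n.+1 | (i < j)%N) w i j * U (s i) (s j) =
      \sum_(i : 'I_n.+1) \sum_(j : 'I_n.+1 | (i < j)%N) h (s i) (s j).
    by apply: eq_bigr => i _; apply: eq_bigr => j _; rewrite /h /w.
  have e2 : koszul_exp d p = \sum_(i : 'I_n.+1) \sum_(j : 'I_n.+1 | (i < j)%N) h i j.
    rewrite /koszul_exp; apply: eq_bigr => i _; rewrite big_mkcondr; apply: eq_bigr => j ij.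
    have nij : p i != p j by rewrite (inj_eq perm_inj) neq_ltn ij.
    have h2 : (p j < p i)%N = ~~ (p i < p j)%N by move: nij; rewrite neq_ltn; case: ltngtP.
    rewrite /h /U ij h2 /=.
    by case: (_ < _)%N; rewrite /bi /= ?mulr1 ?mulr0.
  rewrite e1 e2.
  have := sum_pairs hs.
  have := sum_pairs (h := fun i j => h (s i) (s j)) (fun i j => hs (s i) (s j)).
  have -> : \sum_(i : 'I_n.+1) \sum_(j : 'I_n.+1 | i != j) h (s i) (s j) =
            \sum_(i : 'I_n.+1) \sum_(j : 'I_n.+1 | i != j) h i j.
    rewrite [RHS](reindex_inj (@perm_inj _ s)); apply: eq_bigr => i _.
    rewrite [RHS](reindex_inj (@perm_inj _ s)); apply: eq_bigl => j.
    by rewrite (inj_eq perm_inj).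
  move=> -> e; apply: esym; apply: (mulfI _ e) => //.
exists (\sum_(i : 'I_n.+1) \sum_(j : 'I_n.+1 | (i < j)%N) w i j * A i j * U (s i) (s j)).
rewrite E1 KX KY mulr_sumr -big_split -sumrB; apply: eq_bigr => i _.
rewrite mulr_sumr -big_split -sumrB; apply: eq_bigr => j _.
rewrite /=; ring.
Qed.

Lemma sgnz_koszul_mul (K : fieldType) n (d : 'I_n.+1 -> int) (s p : 'S_n.+1) x :
  sgnz (koszul_exp d (s * p) + x) =
  sgnz (koszul_exp (fun i => d (p i)) s + koszul_exp d p + x) :> K.
Proof.
have [c ->] := koszul_mul d s p.
apply: (@sgnz_eq K _ _ (- c)); ring.
Qed.

Definition rotf (s m l p : nat) : nat :=
  if (s <= p < s + m)%N then (p + l)%N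
  else if (s + m <= p < s + m + l)%N then (p - m)%N else p.

Lemma rotf_lt s m l N p : (s + m + l <= N)%N -> (p < N)%N -> (rotf s m l p < N)%N.
Proof. rewrite /rotf => h1 h2; do 2?case: ifP; lia. Qed.

Lemma rotf_inj s m l : injective (rotf s m l).
Proof. move=> p q; rewrite /rotf; repeat case: ifP; lia. Qed.

Lemma rotf_inv s m l p q :
  ((p < q)%N && (rotf s m l q < rotf s m l p)%N) =
  ((s <= p < s + m)%N && (s + m <= q < s + m + l)%N).
Proof. rewrite /rotf; repeat case: ifP; lia. Qed.

Definition rotfun n s m l (x : 'I_n.+1) : 'I_n.+1 :=
  inord (if (s + m + l <= n.+1)%N then rotf s m l x else x).

Lemma rotfun_inj n s m l : injective (@rotfun n s m l).
Proof.
move=> x y; rewrite /rotfun; case: ifP => h.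
  move=> /(congr1 val) /=; rewrite !inordK; try exact: rotf_lt.
  by move/rotf_inj/val_inj.
by move=> /(congr1 val) /=; rewrite !inordK // => /val_inj.
Qed.

Definition rotp n s m l : 'S_n.+1 := perm (@rotfun_inj n s m l).

Lemma rotpE n s m l (x : 'I_n.+1) : (s + m + l <= n.+1)%N ->
  rotp n s m l x = inord (rotf s m l x).
Proof. by move=> h; rewrite /rotp permE /rotfun h. Qed.

Lemma rotp_val n s m l (x : 'I_n.+1) : (s + m + l <= n.+1)%N ->
  (rotp n s m l x : nat) = rotf s m l x.
Proof. by move=> h; rewrite rotpE // inordK //; apply: rotf_lt. Qed.

Lemma sum_range (G : nat -> int) s m N : (s + m <= N)%N ->
  \sum_(0 <= i < N | (s <= i < s + m)%N) G i = \sum_(i <- iota s m) G i.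
Proof.
move=> h; rewrite /index_iota subn0.
have -> : N = (s + (m + (N - (s + m))))%N by lia.
rewrite iotaD iotaD !big_cat /= add0n.
rewrite big1_seq; last by move=> i /andP [c]; rewrite mem_iota; move: c; lia.
rewrite [X in _ + (_ + X)]big1_seq; last first.
  by move=> i /andP [c]; rewrite mem_iota; move: c; lia.
rewrite add0r addr0 big_seq_cond [RHS]big_seq; apply: eq_bigl => i.
by rewrite mem_iota; case: (s <= i)%N; case: (i < s + m)%N.
Qed.

Lemma sum_ord_range n (F : 'I_n.+1 -> int) s m : (s + m <= n.+1)%N ->
  \sum_(i : 'I_n.+1 | (s <= i < s + m)%N) F i = \sum_(q <- iota s m) F (inord q).
Proof.
move=> h; rewrite big_mknat big_nat_cond.
rewrite (eq_bigl (fun i => (0 <= i < n.+1)%N && (s <= i < s + m)%N)); last first.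
  by move=> i /=; case: (ltnP i n.+1) => hi /=; rewrite ?inordK //.
by rewrite -big_nat_cond sum_range.
Qed.

Lemma koszul_rot n (e : 'I_n.+1 -> int) s m l : (s + m + l <= n.+1)%N ->
  koszul_exp e (rotp n s m l) =
  (\sum_(q <- iota s m) e (rotp n s m l (inord q))) *
  (\sum_(q <- iota (s + m) l) e (rotp n s m l (inord q))).
Proof.
move=> h.
rewrite -(@sum_ord_range n (fun i => e (rotp n s m l i)) s m); last lia.
rewrite -(@sum_ord_range n (fun i => e (rotp n s m l i)) (s + m) l); last lia.
rewrite big_distrlr /= /koszul_exp [RHS]big_mkcond; apply: eq_bigr => i _.
case: ifP => hA.
  apply: eq_bigl => j; by rewrite !rotp_val // rotf_inv hA.
rewrite big_pred0 // => j; by rewrite !rotp_val // rotf_inv hA.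
Qed.


Definition Tg (K : fieldType) (L : lmodType K) (br : L -> L -> L)
  (delta : L -> L) (n : nat) (kap : int) (b : nat -> L) (db : nat -> int)
  (j k : nat) : L :=
  sgnz (kap + \sum_(p <- iota 1 j) db p) *:
      lnest br
        (br (lnest br (Dop delta (b 0%N) (db 0%N)) (map b (iota 1 j)))
            (lnest br (Dop delta (b j.+1) (db j.+1)) (map b (iota j.+2 k))))
        (map b (iota (j + k).+2 (n - (j + k).+1))).

Lemma Tg_sym (K : fieldType) (L : lmodType K)
  (Lg : int -> {pred L}) (br : L -> L -> L) (delta : L -> L)
  (HL : is_dgla Lg br delta) n kap kap' (b b' : nat -> L) (db db' : nat -> int)
  (Hb : forall p, b p \in Lg (db p)) j k :
  b' 0%N = b j.+1 -> db' 0%N = db j.+1 -> b' k.+1 = b 0%N -> db' k.+1 = db 0%N ->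
  map b' (iota 1 k) = map b (iota j.+2 k) ->
  \sum_(p <- iota 1 k) db' p = \sum_(p <- iota j.+2 k) db p ->
  map b' (iota k.+2 j) = map b (iota 1 j) ->
  map b' (iota (k + j).+2 (n - (k + j).+1)) = map b (iota (j + k).+2 (n - (j + k).+1)) ->
  kap' = kap + (db j.+1 + \sum_(p <- iota j.+2 k) db p) * (db 0%N + \sum_(p <- iota 1 j) db p) ->
  Tg br delta n kap b db j k = Tg br delta n kap' b' db' k j.
Proof.
move: HL => [_ [_ [_ [_ [brl [brr [brdeg [anti [jac [_ [ddeg _]]]]]]]]]]].
move=> e0 ed0 e1 ed1 m1 s1 m2 mt ek.
rewrite /Tg e0 ed0 e1 ed1 m1 s1 m2 mt.
case: (eqVneq (db 0%N) 1) => h0; last first.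
  have -> : Dop delta (b 0%N) (db 0%N) = 0 by rewrite /Dop (negbTE h0).
  by rewrite !(lnest_zero brl) (br0l brl) (br0r brr) (lnest_zero brl) !scaler0.
case: (eqVneq (db j.+1) 1) => h1; last first.
  have -> : Dop delta (b j.+1) (db j.+1) = 0 by rewrite /Dop (negbTE h1).
  by rewrite !(lnest_zero brl) (br0l brl) (br0r brr) (lnest_zero brl) !scaler0.
rewrite /Dop h0 h1 eqxx.
set du := \sum_(p <- iota 1 j) db p.
set dv := \sum_(p <- iota j.+2 k) db p.
have HU : lnest br (delta (b 0%N)) (map b (iota 1 j)) \in Lg (0 + du).
  apply: lnest_deg => //; have := ddeg _ _ (Hb 0%N); rewrite h0 subrr //.
have HV : lnest br (delta (b j.+1)) (map b (iota j.+2 k)) \in Lg (0 + dv).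
  apply: lnest_deg => //; have := ddeg _ _ (Hb j.+1); rewrite h1 subrr //.
rewrite (anti _ _ _ _ HU HV) -scaleNr (lnest_scale brl) scalerA.
congr (_ *: _).
rewrite ek h0 h1 !add0r -/du -/dv.
rewrite [RHS](@sgnz_eqN K _ (kap + du + du * dv) dv); last by ring.
by rewrite [in RHS]sgnzD mulrN.
Qed.

Lemma lnest_cat (L : Type) (br : L -> L -> L) x s1 s2 :
  lnest br x (s1 ++ s2) = lnest br (lnest br x s1) s2.
Proof. by rewrite /lnest foldl_cat. Qed.

Lemma Tg_step (K : fieldType) (L : lmodType K)
  (Lg : int -> {pred L}) (br : L -> L -> L) (delta : L -> L)
  (HL : is_dgla Lg br delta) n kap kap' (b b' : nat -> L) (db db' : nat -> int)
  (Hb : forall p, b p \in Lg (db p)) j k :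
  (j + k + 2 <= n)%N ->
  b' 0%N = b 0%N -> db' 0%N = db 0%N -> b' j.+2 = b j.+1 -> db' j.+2 = db j.+1 ->
  map b' (iota 1 j.+1) = map b (iota 1 j) ++ [:: b (j + k).+2] ->
  \sum_(p <- iota 1 j.+1) db' p = \sum_(p <- iota 1 j) db p + db (j + k).+2 ->
  map b' (iota j.+3 k) = map b (iota j.+2 k) ->
  map b' (iota (j.+1 + k).+2 (n - (j.+1 + k).+1)) =
     map b (iota (j + k).+3 (n - (j + k).+2)) ->
  kap' = kap + db (j + k).+2 * (db j.+1 + \sum_(p <- iota j.+2 k) db p) ->
  Tg br delta n kap b db j k.+1 =
  Tg br delta n kap b db j k - Tg br delta n kap' b' db' j.+1 k.
Proof.
move: HL => [_ [_ [_ [_ [brl [brr [brdeg [anti [jac [_ [ddeg _]]]]]]]]]]].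
move=> hn e0 ed0 e1 ed1 m1 s1 m2 mt ek.
have t1 : iota j.+2 k.+1 = iota j.+2 k ++ [:: (j + k).+2].
  have -> : k.+1 = (k + 1)%N by rewrite addn1.
  by rewrite iotaD; congr (_ ++ _); rewrite /= addSn addnS.
have t2 : iota (j + k).+2 (n - (j + k).+1) = (j + k).+2 :: iota (j + k).+3 (n - (j + k).+2).
  by have -> : (n - (j + k).+1 = (n - (j + k).+2).+1)%N by lia.
have t3 : (j + k.+1 = (j + k).+1)%N by rewrite addnS.
rewrite /Tg e0 ed0 e1 ed1 m1 s1 m2 mt t1 t3 t2 map_cat /= !lnest_cat.
set a := b (j + k).+2; set da := db (j + k).+2.
have Z : forall s, foldl br 0 s = 0 := @lnest_zero K L br brl.
have B0l := @br0l K L br brl. have B0r := @br0r K L br brr.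
case: (eqVneq (db 0%N) 1) => h0; last first.
  have -> : Dop delta (b 0%N) (db 0%N) = 0 by rewrite /Dop (negbTE h0).
  rewrite /lnest /=; do 4 rewrite ?Z ?B0l ?B0r /=.
  by rewrite !scaler0 subr0.
case: (eqVneq (db j.+1) 1) => h1; last first.
  have -> : Dop delta (b j.+1) (db j.+1) = 0 by rewrite /Dop (negbTE h1).
  rewrite /lnest /=; do 4 rewrite ?Z ?B0l ?B0r /=.
  by rewrite !scaler0 subr0.
rewrite /Dop h0 h1 eqxx.
set du := \sum_(p <- iota 1 j) db p.
set dv := \sum_(p <- iota j.+2 k) db p.
set U := lnest br (delta (b 0%N)) (map b (iota 1 j)).
set V := lnest br (delta (b j.+1)) (map b (iota j.+2 k)).
set tl := map b (iota (j + k).+3 (n - (j + k).+2)).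
have HU : U \in Lg (0 + du).
  apply: lnest_deg => //; have := ddeg _ _ (Hb 0%N); rewrite h0 subrr //.
have HV : V \in Lg (0 + dv).
  apply: lnest_deg => //; have := ddeg _ _ (Hb j.+1); rewrite h1 subrr //.
have HUa : br U a \in Lg (0 + du + da) by exact: (brdeg _ _ _ _ HU (Hb _)).
rewrite /lnest [foldl br V _]/= [foldl br U [:: a]]/= -!/(lnest br _ tl).
rewrite (jac _ _ _ _ _ HU HV) (anti _ _ _ _ HV HUa) -scaleNr scalerA.
rewrite [X in lnest br X _]addrC (@lnest_lin K L br brl) scalerDr scalerA addrC; congr (_ + _).
rewrite -scaleNr; congr (_ *: _).
rewrite ek h1 -/da -/dv !add0r.
rewrite [in RHS](@sgnz_eq K _ (kap + du + du * dv + dv * (du + da)) (da - du * dv)); last by ring.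
by rewrite !sgnzD mulrN mulrN !mulrA.
Qed.


Lemma rotf_map s m l st len (g : nat -> nat) :
  (forall i, (i < len)%N -> rotf s m l (st + i) = g i) ->
  map (rotf s m l) (iota st len) = map g (iota 0 len).
Proof.
move=> h; apply: (@eq_from_nth _ 0%N); rewrite ?size_map ?size_iota // => i hi.
by rewrite !(nth_map 0%N) ?size_iota // !nth_iota // h.
Qed.

Lemma map_iota0 st len : map (addn st) (iota 0 len) = iota st len.
Proof. by rewrite -iotaDl addn0. Qed.

Lemma rotf_mapA s m l st len : (s <= st)%N -> (st + len <= s + m)%N ->
  map (rotf s m l) (iota st len) = iota (st + l) len.
Proof.
move=> h1 h2; rewrite (@rotf_map _ _ _ _ _ (addn (st + l))) ?map_iota0 //.
move=> i hi; rewrite /rotf; case: ifP; lia.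
Qed.

Lemma rotf_mapB s m l st len : (s + m <= st)%N -> (st + len <= s + m + l)%N ->
  map (rotf s m l) (iota st len) = iota (st - m) len.
Proof.
move=> h1 h2; rewrite (@rotf_map _ _ _ _ _ (addn (st - m))) ?map_iota0 //.
move=> i hi; rewrite /rotf; do 2?case: ifP; lia.
Qed.

Lemma rotf_mapO s m l st len : (s + m + l <= st)%N ->
  map (rotf s m l) (iota st len) = iota st len.
Proof.
move=> h1; rewrite (@rotf_map _ _ _ _ _ (addn st)) ?map_iota0 //.
move=> i hi; rewrite /rotf; do 2?case: ifP; lia.
Qed.

Lemma map_rotp (T : Type) n s m l (f : 'I_n.+1 -> T) (pi : 'S_n.+1) st len :
  (s + m + l <= n.+1)%N -> (st + len <= n.+1)%N ->
  map (fun p => f ((rotp n s m l * pi)%g (inord p))) (iota st len) =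
  map (fun p => f (pi (inord p))) (map (rotf s m l) (iota st len)).
Proof.
move=> h1 h2; rewrite -map_comp; apply/eq_in_map => p; rewrite mem_iota => hp /=.
by rewrite permM rotpE // inordK //; lia.
Qed.

Lemma pt_rotp (T : Type) n s m l (f : 'I_n.+1 -> T) (pi : 'S_n.+1) p :
  (s + m + l <= n.+1)%N -> (p < n.+1)%N ->
  f ((rotp n s m l * pi)%g (inord p)) = f (pi (inord (rotf s m l p))).
Proof. by move=> h1 h2; rewrite permM rotpE // inordK. Qed.

Lemma sum_map (G : nat -> int) sq : \sum_(p <- sq) G p = \sum_(x <- map G sq) x.
Proof. by rewrite big_map. Qed.

Lemma koszul_rot' n (d : 'I_n.+1 -> int) (pi : 'S_n.+1) s m l :
  (s + m + l <= n.+1)%N ->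
  koszul_exp (fun i => d (pi i)) (rotp n s m l) =
  (\sum_(q <- map (rotf s m l) (iota s m)) d (pi (inord q))) *
  (\sum_(q <- map (rotf s m l) (iota (s + m) l)) d (pi (inord q))).
Proof.
move=> h; rewrite koszul_rot // !big_map; congr (_ * _); rewrite !big_seq;
  apply: eq_bigr => q; rewrite mem_iota => hq /=; rewrite rotpE // inordK //; lia.
Qed.

Lemma Tg_kap (K : fieldType) (L : lmodType K) (br : L -> L -> L) (delta : L -> L)
  n kap kap2 z b db j k : kap = kap2 + 2 * z ->
  Tg br delta n kap b db j k = Tg br delta n kap2 b db j k.
Proof.
move=> ->; rewrite /Tg; congr (_ *: _); apply: (@sgnz_eq K _ _ z); ring.
Qed.

Lemma T_sym (K : fieldType) (L : lmodType K)
  (Lg : int -> {pred L}) (br : L -> L -> L) (delta : L -> L)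
  (HL : is_dgla Lg br delta) n (a : 'I_n.+1 -> L) (d : 'I_n.+1 -> int)
  (Ha : forall i, a i \in Lg (d i)) j k (pi : 'S_n.+1) : (j + k < n)%N ->
  Tg br delta n (koszul_exp d pi) (fun p => a (pi (inord p))) (fun p => d (pi (inord p))) j k =
  Tg br delta n (koszul_exp d (rotp n 0 k.+1 j.+1 * pi)%g)
     (fun p => a ((rotp n 0 k.+1 j.+1 * pi)%g (inord p)))
     (fun p => d ((rotp n 0 k.+1 j.+1 * pi)%g (inord p))) k j.
Proof.
move=> hjk.
have hr : (0 + k.+1 + j.+1 <= n.+1)%N by lia.
have [c Hc] := koszul_mul d (rotp n 0 k.+1 j.+1) pi.
rewrite [RHS](@Tg_kap K L br delta n _
   (koszul_exp (fun i => d (pi i)) (rotp n 0 k.+1 j.+1) + koszul_exp d pi) (- c)); last first.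
  by rewrite Hc; ring.
clear Hc.
eapply (@Tg_sym K L Lg br delta HL).
- by move=> p; exact: Ha.
- by rewrite (@pt_rotp _ n _ _ _ a).
- by rewrite (@pt_rotp _ n _ _ _ d).
- rewrite (@pt_rotp _ n _ _ _ a) //; last lia.
  have -> : rotf 0 k.+1 j.+1 k.+1 = 0%N by rewrite /rotf; do 2?case: ifP; lia.
  done.
- rewrite (@pt_rotp _ n _ _ _ d) //; last lia.
  have -> : rotf 0 k.+1 j.+1 k.+1 = 0%N by rewrite /rotf; do 2?case: ifP; lia.
  done.
- rewrite map_rotp // ?rotf_mapA //; lia.
- rewrite sum_map map_rotp // ?rotf_mapA -?sum_map //; lia.
- rewrite map_rotp // ?rotf_mapB ?subSnn //; lia.
- rewrite map_rotp ?rotf_mapO; first by rewrite addnC.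
  1-3: lia.
- have e1 : map (rotf 0 k.+1 j.+1) (iota 0 k.+1) = iota j.+1 k.+1.
    by rewrite rotf_mapA.
  have e2 : map (rotf 0 k.+1 j.+1) (iota (0 + k.+1) j.+1) = iota 0 j.+1.
    by rewrite rotf_mapB // subnn.
  rewrite koszul_rot' // e1 e2 /= !big_cons; ring.
Qed.

Lemma rotf_mapP s m l st len : (st + len <= s)%N ->
  map (rotf s m l) (iota st len) = iota st len.
Proof.
move=> h1; rewrite (@rotf_map _ _ _ _ _ (addn st)) ?map_iota0 //.
move=> i hi; rewrite /rotf; do 2?case: ifP; lia.
Qed.

Lemma T_step (K : fieldType) (L : lmodType K)
  (Lg : int -> {pred L}) (br : L -> L -> L) (delta : L -> L)
  (HL : is_dgla Lg br delta) n (a : 'I_n.+1 -> L) (d : 'I_n.+1 -> int)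
  (Ha : forall i, a i \in Lg (d i)) j k (pi : 'S_n.+1) : (j + k + 1 < n)%N ->
  Tg br delta n (koszul_exp d pi) (fun p => a (pi (inord p))) (fun p => d (pi (inord p))) j k.+1 =
  Tg br delta n (koszul_exp d pi) (fun p => a (pi (inord p))) (fun p => d (pi (inord p))) j k -
  Tg br delta n (koszul_exp d (rotp n j.+1 1 k.+1 * pi)%g)
     (fun p => a ((rotp n j.+1 1 k.+1 * pi)%g (inord p)))
     (fun p => d ((rotp n j.+1 1 k.+1 * pi)%g (inord p))) j.+1 k.
Proof.
move=> hjk.
have hr : (j.+1 + 1 + k.+1 <= n.+1)%N by lia.
have [c Hc] := koszul_mul d (rotp n j.+1 1 k.+1) pi.
rewrite [X in _ = _ - X](@Tg_kap K L br delta n _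
   (koszul_exp (fun i => d (pi i)) (rotp n j.+1 1 k.+1) + koszul_exp d pi) (- c)); last first.
  by rewrite Hc; ring.
clear Hc.
have E1 : map (rotf j.+1 1 k.+1) (iota 1 j.+1) = iota 1 j ++ [:: (j + k).+2].
  have -> : iota 1 j.+1 = iota 1 j ++ [:: j.+1].
    by have := iotaD 1 j 1; rewrite addn1 add1n.
  rewrite map_cat rotf_mapP; last lia.
  congr (_ ++ _); rewrite /= /rotf; do 2?case: ifP; try lia.
  by move=> _; congr [:: _]; lia.
have r2 : rotf j.+1 1 k.+1 j.+2 = j.+1 by rewrite /rotf; do 2?case: ifP; lia.
eapply (@Tg_step K L Lg br delta HL).
- by move=> p; exact: Ha.
- lia.
- by rewrite (@pt_rotp _ n _ _ _ a).
- by rewrite (@pt_rotp _ n _ _ _ d).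
- by rewrite (@pt_rotp _ n _ _ _ a) ?r2 //; lia.
- by rewrite (@pt_rotp _ n _ _ _ d) ?r2 //; lia.
- rewrite map_rotp ?E1 ?map_cat //; lia.
- rewrite [LHS]sum_map (@map_rotp _ n _ _ _ d) // ?E1; last lia.
  by rewrite map_cat big_cat /= big_seq1 -sum_map.
- rewrite map_rotp ?rotf_mapB; [by rewrite subn1 | lia ..].
- rewrite map_rotp ?rotf_mapO; [by rewrite addSn | lia ..].
- have e1 : map (rotf j.+1 1 k.+1) (iota j.+1 1) = [:: (j + k).+2].
    rewrite /= /rotf; do 2?case: ifP; try lia.
    by move=> _; congr [:: _]; lia.
  have e2 : map (rotf j.+1 1 k.+1) (iota (j.+1 + 1) k.+1) = iota j.+1 k.+1.
    by rewrite rotf_mapB ?addnK //; lia.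
  rewrite koszul_rot' // e1 e2 /= big_seq1 !big_cons; ring.
Qed.


Lemma Zjk_Tg (K : fieldType) (L : lmodType K) (br : L -> L -> L) (delta : L -> L)
  n (a : 'I_n.+1 -> L) (d : 'I_n.+1 -> int) j k :
  Zjk br delta a d j k = \sum_(pi : 'S_n.+1)
    Tg br delta n (koszul_exp d pi) (fun p => a (pi (inord p)))
       (fun p => d (pi (inord p))) j k.
Proof.
rewrite /Zjk; apply: eq_bigr => pi _; rewrite /Tg /= /index_iota.
by rewrite subSS subn0.
Qed.

Unset Implicit Arguments.

Theorem lemma2 (K : fieldType) (L : lmodType K)
  (Lg : int -> {pred L}) (br : L -> L -> L) (delta : L -> L)
  (HL : is_dgla Lg br delta)
  (n : nat) (a : 'I_n.+1 -> L) (d : 'I_n.+1 -> int)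
  (Ha : forall i, a i \in Lg (d i)) :
  (forall j k : nat, (j + k < n)%N ->
     Zjk br delta a d j k = Zjk br delta a d k j) /\
  (forall j k : nat, (j + k + 1 < n)%N ->
     Zjk br delta a d j k = Zjk br delta a d j.+1 k + Zjk br delta a d j k.+1).
Proof.
split.
  move=> j k hjk; rewrite !Zjk_Tg.
  rewrite [RHS](reindex_inj (mulgI (rotp n 0 k.+1 j.+1))) /=.
  apply: eq_bigr => pi _; exact: (T_sym HL Ha).
move=> j k hjk; rewrite !Zjk_Tg.
rewrite [X in _ = _ + X](eq_bigr _ (fun pi _ => T_step HL Ha pi hjk)).
rewrite sumrB [X in _ - X](_ : _ = \sum_(pi : 'S_n.+1)
  Tg br delta n (koszul_exp d pi) (fun p => a (pi (inord p)))
       (fun p => d (pi (inord p))) j.+1 k); first by rewrite addrC subrK.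
by rewrite [RHS](reindex_inj (mulgI (rotp n j.+1 1 k.+1))).
Qed.
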